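(* Consider a credit-attribution game with authors $N=\{1,\dots,n\}$, let $x\in N$, let $p^*\in(0,1]^n$ be baseline reliabilities and let $R\subseteq N\setminus\{x\}$. Let $p$ be obtained from $p^*$ by setting $p_j=0$ for $j\in R$ and $p_j=p^*_j$ otherwise. Then $Sh[\overline{v_{FC}}](x)$ computed with parameters $p$ is at least $Sh[\overline{v_{FC}}](x)$ computed with parameters $p^*$; i.e., no removal attack decreases the Shapley value of $x$ in the full credit game.
   Context: A credit-attribution game has authors $N$ and papers $P_1,\dots,P_m$, each paper $P_k$ with author set $Auth_k\subseteq N$ and weight $w_k\in\mathbb{R}_+$. The full credit game has value $v_{FC}(S)=\sum\{w_k: Auth_k\cap S\ne\emptyset\}$. For $T\subseteq S$, $\Pi_{T,S}=\prod_{i\in T}p_i\prod_{i\in S\setminus T}(1-p_i)$; reliability extension $\overline v(S)=\sum_{T\subseteq S}v(T)\Pi_{T,S}$. Shapley value $Sh[v](x)=\frac1{n!}\sum_\pi[v(S^x_\pi\cup\{x\})-v(S^x_\pi)]$ over permutations $\pi$ of $N$, $S^x_\pi$ the players preceding $x$. *)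

(* Defs.v *)
From HB Require Import structures.
From mathcomp Require Import all_boot all_order all_algebra all_fingroup.
Set Implicit Arguments. Unset Strict Implicit. Unset Printing Implicit Defensive.
Import Order.TTheory GRing.Theory Num.Theory.
Local Open Scope ring_scope.

Section CreditGames.
Variables (R : realFieldType) (n m : nat).

Definition v_FC (Auth : 'I_m -> {set 'I_n}) (w : 'I_m -> R) (S : {set 'I_n}) : R :=
  \sum_(k < m | [exists i, (i \in Auth k) && (i \in S)]) w k.

Definition PiTS (p : 'I_n -> R) (T S : {set 'I_n}) : R :=
  (\prod_(i in T) p i) * \prod_(i in S :\: T) (1 - p i).

Definition rel_ext (p : 'I_n -> R) (v : {set 'I_n} -> R) (S : {set 'I_n}) : R :=
  \sum_(T : {set 'I_n} | T \subset S) v T * PiTS p T S.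

(* Players preceding x in the ordering pi (pi maps positions to players). *)
Definition preceding (pi : {perm 'I_n}) (x : 'I_n) : {set 'I_n} :=
  [set y | (pi^-1)%g y < (pi^-1)%g x]%N.

Definition shapley (v : {set 'I_n} -> R) (x : 'I_n) : R :=
  (n`!%:R)^-1 * \sum_(pi : {perm 'I_n}) (v (x |: preceding pi x) - v (preceding pi x)).

End CreditGames.

(* Main.v *)
Require Import Defs.
From HB Require Import structures.
From mathcomp Require Import all_boot all_order all_algebra all_fingroup.
From mathcomp Require Import ring lra.
Import Order.TTheory GRing.Theory Num.Theory.
Local Open Scope ring_scope.

Section Aux.
Variables (R : realFieldType) (n : nat).

Lemma sumL (p : 'I_n -> R) (S B : {set 'I_n}) :
  \sum_(T : {set 'I_n} | T \subset S) (if T \subset B then PiTS p T S else 0)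
  = \prod_(i in S :\: B) (1 - p i).
Proof.
pose F i := if (i \in S) && (i \in B) then p i else 0.
pose G i := if i \in S then 1 - p i else 1.
transitivity (\prod_i (F i + G i)); last first.
  rewrite [RHS]big_mkcond; apply: eq_bigr => i _; rewrite /F /G in_setD.
  by case: (i \in S); case: (i \in B) => /=; rewrite ?add0r ?addr0 // addrC subrK.
rewrite bigA_distr big_mkcond /=; apply: eq_big => // J _.
case: (boolP (J \subset S)) => JS; last first.
  have /subsetPn [i iJ iS] := JS.
  by rewrite (bigD1 i) //= iJ /F (negbTE iS) mul0r.
case: (boolP (J \subset B)) => JB; last first.
  have /subsetPn [i iJ iB] := JB.
  by rewrite (bigD1 i) //= iJ /F (negbTE iB) andbF mul0r.
rewrite /PiTS !(big_mkcond (fun i => i \in _)) -big_split /=.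
apply: eq_bigr => i _; rewrite /F /G in_setD.
case: (boolP (i \in J)) => iJ /=.
  by rewrite (subsetP JS _ iJ) (subsetP JB _ iJ) mulr1.
by rewrite mul1r.
Qed.

Lemma meetsE (A T : {set 'I_n}) :
  [exists i, (i \in A) && (i \in T)] = ~~ (T \subset ~: A).
Proof.
apply/existsP/subsetPn => [[i /andP[iA iT]]|[i iT]].
  by exists i => //; rewrite inE iA.
by rewrite inE negbK => iA; exists i; rewrite iA iT.
Qed.

Lemma u_eq (p : 'I_n -> R) (A S : {set 'I_n}) :
  \sum_(T : {set 'I_n} | T \subset S)
     (if [exists i, (i \in A) && (i \in T)] then PiTS p T S else 0)
  = 1 - \prod_(i in S :&: A) (1 - p i).
Proof.
have h1 := sumL p S setT.
have h2 := sumL p S (~: A).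
rewrite setDT big_set0 in h1.
rewrite setDE setCK in h2.
rewrite -h2 -[in RHS]h1 -sumrB; apply: eq_bigr => T _.
rewrite subsetT meetsE; case: (T \subset ~: A) => /=; by rewrite ?subrr ?subr0.
Qed.

Lemma marg (p : 'I_n -> R) (A S : {set 'I_n}) (x : 'I_n) : x \notin S ->
  (1 - \prod_(i in (x |: S) :&: A) (1 - p i)) - (1 - \prod_(i in S :&: A) (1 - p i))
  = if x \in A then p x * \prod_(i in S :&: A) (1 - p i) else 0.
Proof.
move=> xS; case: ifP => xA.
  have -> : (x |: S) :&: A = x |: (S :&: A).
    apply/setP => i; rewrite !inE; case: (eqVneq i x) => [->|] /=.
      by rewrite xA.
    by [].
  rewrite big_setU1 /=; last by rewrite inE (negbTE xS).
  ring.
have -> : (x |: S) :&: A = S :&: A.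
  apply/setP => i; rewrite !inE; case: (eqVneq i x) => [->|] /=.
    by rewrite xA (negbTE xS).
  by [].
by rewrite subrr.
Qed.

Lemma rel_FC (m : nat) (Auth : 'I_m -> {set 'I_n}) (w : 'I_m -> R)
  (p : 'I_n -> R) (S : {set 'I_n}) :
  rel_ext p (v_FC Auth w) S = \sum_(k < m) w k *
    \sum_(T : {set 'I_n} | T \subset S)
     (if [exists i, (i \in Auth k) && (i \in T)] then PiTS p T S else 0).
Proof.
rewrite /rel_ext /v_FC.
under eq_bigr => T _ do rewrite big_distrl /= big_mkcond /=.
rewrite exchange_big /=; apply: eq_bigr => k _.
rewrite big_distrr /=; apply: eq_bigr => T _.
by case: ifP => _; rewrite ?mul0r ?mulr0.
Qed.

End Aux.

Theorem theorem6 (R : realFieldType) (n m : nat)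
    (Auth : 'I_m -> {set 'I_n}) (w : 'I_m -> R)
    (hw : forall k, 0 <= w k)
    (x : 'I_n) (pstar : 'I_n -> R)
    (hp : forall i, 0 < pstar i <= 1)
    (Rm : {set 'I_n}) (hR : x \notin Rm) :
  let p := fun j => if j \in Rm then 0 else pstar j in
  shapley (rel_ext pstar (v_FC Auth w)) x <= shapley (rel_ext p (v_FC Auth w)) x.
Proof.
cbv zeta; rewrite /shapley; apply: ler_wpM2l; first by rewrite invr_ge0 ler0n.
apply: ler_sum => pi _.
have xP : x \notin preceding pi x by rewrite inE ltnn.
rewrite !rel_FC -!sumrB; apply: ler_sum => k _.
rewrite -!mulrBr; apply: ler_wpM2l; first exact: hw.
rewrite !u_eq !marg //; case: ifP => // _.
rewrite (negbTE hR); apply: ler_wpM2l.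
  by have /andP[h _] := hp x; apply: ltW.
apply: ler_prod => i _; have /andP[h1 h2] := hp i.
by case: ifP => _; apply/andP; split; lra.
Qed.
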